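(* Let $f\in R$ with $0\le f\le b\cdot1$ and let $0=s_0<s_1<\dots<s_n=b$ be rationals. Then $$\sum_{i=0}^{n-1}s_i\,(s_i<f<s_{i+1})\;\le\; f\;\le\;\sum_{i=0}^{n-1}s_{i+1}\,(s_i\le f\le s_{i+1}),$$ where $(s_i<f<s_{i+1}):=D(f-s_i)\wedge D(s_{i+1}-f)$ and $(s_i\le f\le s_{i+1}):=(f\ge s_i)\wedge(f\le s_{i+1})$.
   Context: $R$ is a Riesz space over $\mathbb{Q}$ with strong unit $1$; rationals $r$ are identified with $r\cdot1$. $\mathrm{Spec}(R)$ is the distributive lattice generated by $D(a)$, $a\in R$, subject to $D(1)=1$; $D(a)\wedge D(-a)=0$; $D(a+b)\le D(a)\vee D(b)$; $D(a)=0$ if $a\le0$; $D(a\vee b)=D(a)\vee D(b)$. $B$ is the Boolean algebra freely generated by $\mathrm{Spec}(R)$; $(f>r):=D(f-r)$, $(f<r):=D(r-f)$, $(f\le r):=\neg(f>r)$, $(f\ge r):=\neg(f<r)$. A positive simple function is a formal finite sum $\sum_i r_ix_i$ with rationals $r_i\ge0$, $x_i\in B$; for a finite index set $I$, $x_I:=\bigwedge_{i\in I}x_i$ ($x_\emptyset=1$), $r_I:=\sum_{i\in I}r_i$ ($r_\emptyset=0$). For $f\in R$: $\sum_ir_ix_i\le f$ iff $x_I\le(f\ge r_I)$ for every finite index set $I$; $f\le\sum_js_jy_j$ iff $1=\bigvee_J((f\le s_J)\wedge y_J)$, the join over all finite index sets $J$. *)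

(* Defs.v *)
From HB Require Import structures.
From mathcomp Require Import all_boot all_order all_algebra.
Set Implicit Arguments. Unset Strict Implicit. Unset Printing Implicit Defensive.
Import Order.TTheory GRing.Theory Num.Theory.

Local Open Scope ring_scope.

(* A Riesz space over Q with strong unit [one]: a Q-vector space [V] with a
   partial order [le] compatible with the vector-space operations, which is a
   lattice (we only need the join [join], given as least upper bound). *)
Definition is_riesz_unit (V : lmodType rat) (le : rel V) (join : V -> V -> V)
    (one : V) : Prop :=
  (forall x, le x x) /\
  (forall x y, le x y -> le y x -> x = y) /\
  (forall x y z, le x y -> le y z -> le x z) /\
  (forall x y z, le x y -> le (x + z) (y + z)) /\
  (forall (q : rat) x y, 0 <= q -> le x y -> le (q *: x) (q *: y)) /\
  (forall x y, le x (join x y) /\ le y (join x y)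
               /\ forall z, le x z -> le y z -> le (join x y) z) /\
  le 0 one /\
  (forall a, exists n : nat, le a (n%:R *: one) /\ le (- (n%:R *: one)) a).

(* [D : V -> B] satisfies the defining relations of Spec(R), with B a Boolean
   algebra (complemented distributive lattice with top and bottom). *)
Definition is_spec_map (V : lmodType rat) (le : rel V) (join : V -> V -> V)
    (one : V) (d : Order.disp_t) (B : ctbDistrLatticeType d) (D : V -> B) : Prop :=
  [/\ D one = \top%O,
      (forall a, (D a `&` D (- a))%O = \bot%O),
      (forall a b, (D (a + b) <= D a `|` D b)%O),
      (forall a, le a 0 -> D a = \bot%O)
    & (forall a b, D (join a b) = (D a `|` D b)%O)].

Section SimpleFunctions.
Variables (V : lmodType rat) (one : V) (d : Order.disp_t)
          (B : ctbDistrLatticeType d) (D : V -> B).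

(* rationals r are identified with r *: one *)
Definition gtB (f : V) (r : rat) : B := D (f - r *: one).
Definition ltB (f : V) (r : rat) : B := D (r *: one - f).
Definition leB (f : V) (r : rat) : B := (~` gtB f r)%O.
Definition geB (f : V) (r : rat) : B := (~` ltB f r)%O.

(* A simple function \sum_i r_i x_i is a finite list of pairs (r_i, x_i);
   index sets are subsets of 'I_(size s). *)
Definition sf_coef (s : seq (rat * B)) (I : {set 'I_(size s)}) : rat :=
  \sum_(i in I) (nth (0, \top%O) s i).1.
Definition sf_meet (s : seq (rat * B)) (I : {set 'I_(size s)}) : B :=
  (\meet_(i in I) (nth (0, \top%O) s i).2)%O.

Definition sf_le (s : seq (rat * B)) (f : V) : Prop :=
  forall I : {set 'I_(size s)}, (sf_meet I <= geB f (sf_coef I))%O.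

Definition le_sf (f : V) (t : seq (rat * B)) : Prop :=
  \top%O = (\join_(J : {set 'I_(size t)}) (leB f (sf_coef J) `&` sf_meet J))%O.

End SimpleFunctions.

(* Main.v *)
Require Import Defs.
From HB Require Import structures.
From mathcomp Require Import all_boot all_order all_algebra.
Import Order.TTheory GRing.Theory Num.Theory.
Import Order.Theory.
Local Open Scope ring_scope.

Lemma nth_sq (T : Type) (x0 : T) (g : nat -> T) n i :
  (i < n)%N -> nth x0 [seq g j | j <- iota 0 n] i = g i.
Proof. by move=> hi; rewrite (nth_map 0%N) ?size_iota // nth_iota. Qed.

Theorem lemma4p8 (V : lmodType rat) (le : rel V) (join : V -> V -> V) (one : V)
    (hR : is_riesz_unit le join one)
    (d : Order.disp_t) (B : ctbDistrLatticeType d) (D : V -> B)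
    (hD : is_spec_map le join one D)
    (f : V) (b : rat) (n : nat) (s : nat -> rat)
    (hf0 : le 0 f) (hfb : le f (b *: one))
    (hs0 : s 0%N = 0) (hsn : s n = b)
    (hinc : forall i, (i < n)%N -> s i < s i.+1) :
  sf_le one D
    [seq (s i, (D (f - s i *: one) `&` D (s i.+1 *: one - f))%O) | i <- iota 0 n] f
  /\
  le_sf one D f
    [seq (s i.+1, (geB one D f (s i) `&` leB one D f (s i.+1))%O) | i <- iota 0 n].
Proof.
have [refl [anti [trans [addc [scal [joinp [pos1 arch]]]]]]] := hR.
case: hD => D1 Dneg Dadd Dle0 Djoin.
have le0 : forall a c, le a c -> le (a - c) 0.
  by move=> a c h; rewrite -(subrr c); apply: addc.
have Dmono : forall a c, le a c -> (D a <= D c)%O.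
  move=> a c h; have := Dadd c (a - c); rewrite addrC subrK (Dle0 (a - c)) ?joinx0 //.
  exact: le0.
have lesc : forall q r : rat, q <= r -> le (q *: one) (r *: one).
  move=> q r h; have := scal (r - q) 0 one; rewrite subr_ge0 h scaler0 => /(_ isT pos1).
  move/(addc _ _ (q *: one)); by rewrite add0r scalerBl subrK.
have Dopp : forall a, (D a <= ~` D (- a))%O.
  by move=> a; rewrite -disj_leC Dneg.
have smono : forall i k, (i + k <= n)%N -> s i <= s (i + k)%N.
  move=> i; elim=> [|k IH] h; first by rewrite addn0.
  apply: le_trans (IH _) _; first by apply: leq_trans h; rewrite addnS.
  rewrite addnS; apply: ltW; apply: hinc; by rewrite -addnS.
split.
- move=> I.
  set sq := [seq _ | i <- iota 0 n].
  have hlt : forall i : 'I_(size sq), (i < n)%N.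
    by move=> i; apply: leq_trans (ltn_ord i) _; rewrite size_map size_iota.
  have hnth : forall i : 'I_(size sq), nth (0, \top%O) sq i =
      (s i, (D (f - s i *: one) `&` D (s i.+1 *: one - f))%O).
    by move=> i; rewrite nth_sq.
  rewrite /sf_meet /sf_coef /geB /ltB.
  case: (set_0Vmem I) => [->|[i Hi]].
    rewrite big_set0 big_set0 scale0r sub0r Dle0 ?compl0 //.
    by have := addc _ _ (- f) hf0; rewrite add0r subrr.
  case: (boolP [exists j, (j \in I) && (j != i)]) => [/existsP [j /andP [Hj Hji]]|Hno].
  + have key : forall i j : 'I_(size sq), (i < j)%N -> i \in I -> j \in I ->
        (\meet_(k in I) (nth (0, \top%O) sq k).2 = \bot)%O.
      move=> i1 j1 hij Hi1 Hj1; apply/eqP; rewrite -lex0.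
      rewrite -[X in (X <= _)%O]meetxx; apply: (le_trans (leI2 (meets_inf _ Hi1) (meets_inf _ Hj1))).
      rewrite !hnth /=.
      have hm : (D (f - s j1 *: one) <= D (f - s i1.+1 *: one))%O.
        apply: Dmono; rewrite addrC [f - _]addrC; apply: addc; rewrite -!scaleNr.
        apply: lesc; rewrite lerN2.
        have := smono i1.+1 (j1 - i1.+1)%N; rewrite subnKC //; apply.
        exact: ltnW (hlt j1).
      apply: le_trans (leI2 (leIr _ _) (leIl _ _)) _.
      apply: le_trans (leI2 (lexx _) hm) _.
      by rewrite meetC -(Dneg (f - s i1.+1 *: one)) opprB.
    case: (ltngtP i j) => hij.
    * by rewrite (key i j) // le0x.
    * by rewrite (key j i) // le0x.
    * by move: Hji; rewrite -(inj_eq val_inj) /= hij eqxx.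
  + have -> : I = [set i].
      apply/setP => j; rewrite in_set1; apply/idP/eqP => [Hj|->//].
      apply/eqP; apply: contraNT Hno => Hji; apply/existsP; exists j; by rewrite Hj.
    rewrite !big_set1 hnth /=.
    by apply: leIxl; rewrite -[_ *: one - f]opprB; apply: Dopp.
- rewrite /le_sf.
  set t := [seq _ | i <- iota 0 n].
  set BIG := (\join_(J : {set 'I_(size t)}) _)%O.
  have Hsup : forall J : {set 'I_(size t)},
      (leB one D f (sf_coef J) `&` sf_meet J <= BIG)%O.
    by move=> J; exact: (joins_sup (P := xpredT)).
  have taut : forall x y : B, (x <= (x `&` ~` y) `|` y)%O.
    by move=> x y; rewrite joinC joinIr joinxC meetx1 leUr.
  apply/esym/eqP; rewrite -le1x.
  have hk : forall k, (k <= n)%N -> (\top <= BIG `|` D (f - s k *: one))%O.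
    elim=> [|k IH] hk.
      have := Hsup set0; rewrite /sf_coef /sf_meet !big_set0 meetx1 /leB /gtB hs0.
      by move=> h; rewrite -(joinCx (D (f - 0 *: one))) leU2.
    apply: le_trans (IH (ltnW hk)) _; rewrite leUx leUl /=.
    have hkt : (k < size t)%N by rewrite size_map size_iota.
    have := Hsup [set Ordinal hkt]; rewrite /sf_coef /sf_meet !big_set1 /= nth_sq //=.
    move=> h; apply: le_trans (Dopp _) _; rewrite opprB.
    apply: le_trans (taut _ (D (f - s k.+1 *: one))) _; apply: leU2 => //.
    apply: le_trans h; rewrite /geB /leB /gtB /ltB lexI leIr /= lexI leIr leIl //.
  have := hk n (leqnn n); rewrite hsn (Dle0 (f - b *: one)) ?joinx0 //.
  exact: le0.
Qed.
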